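(* Let $X$ and $Y$ be $\sigma$-compact metric spaces such that $X$ has no isolated points. For every closed set $T\subseteq X\times Y$ there exist a countable set $A\subseteq X$ and a function $f:A\to Y$ such that $L_f=T$.
   Context: For a function $f:A\to Y$ with $A\subseteq X$, $L_f$ denotes the set of accumulation points in $X\times Y$ of its graph $gr(f)=\{(x,f(x)):x\in A\}$. A space is $\sigma$-compact if it is a countable union of compact sets. *)

(* Defs.v *)
From HB Require Import structures.
From mathcomp Require Import all_boot all_order all_algebra.
From mathcomp Require Import all_classical all_reals all_analysis.
Set Implicit Arguments. Unset Strict Implicit. Unset Printing Implicit Defensive.
Local Open Scope classical_set_scope.

Definition sigma_compact (T : topologicalType) : Prop :=
  exists K : nat -> set T, (forall n, compact (K n)) /\ \bigcup_n K n = [set: T].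

Definition graph_on {X Y : Type} (A : set X) (f : {x : X | A x} -> Y) : set (X * Y) :=
  [set p | exists a : {x : X | A x}, p = (proj1_sig a, f a)].

Definition L_f {X Y : topologicalType} (A : set X) (f : {x : X | A x} -> Y)
  : set (X * Y) := limit_point (graph_on f).

(* Main.v *)
Require Import Defs.
From HB Require Import structures.
From mathcomp Require Import all_boot all_order all_algebra.
From mathcomp Require Import finmap.
From mathcomp Require Import all_classical all_reals all_analysis.
Import Order.TTheory GRing.Theory Num.Theory.
Local Open Scope classical_set_scope.
Local Open Scope ring_scope.

Section S.
Context (R : realType).

Lemma sep_pt (M : metricType R) (x p : M) : x != p ->
  exists2 e : R, 0 < e & forall q, ball x e q -> q != p.
Proof.
move=> xp; exists (mdist x p); first by rewrite mdist_gt0.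
move=> q; rewrite ballEmdist /= => h; apply/eqP => qp; move: h; rewrite qp ltxx.
done.
Qed.

Lemma avoid_fin (M : metricType R) (x : M) (e : R) (F : seq M) :
  ~ isolated [set: M] x -> 0 < e ->
  exists a, [/\ ball x e a, a != x & a \notin F].
Proof.
move=> nis e0.
have [e' e'0 He'] : exists2 e' : R, 0 < e' &
    forall q, ball x e' q -> ball x e q /\ (q \in F -> q = x).
  elim: F => [|p F [e1 e10 H1]]; first by exists e.
  have [px|px] := eqVneq p x.
    exists e1 => // q /H1 [bq Hq]; split => //; rewrite inE => /orP[/eqP->//|].
    exact: Hq.
  have xp : x != p by rewrite eq_sym.
  have [e2 e20 H2] := @sep_pt M x p xp.
  exists (Order.min e1 e2); first by rewrite lt_min e10 e20.
  move=> q bq.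
  have /H1 [bqe Hq] : ball x e1 q by apply: le_ball bq; rewrite ge_min lexx.
  have q2 : ball x e2 q by apply: le_ball bq; rewrite ge_min lexx orbT.
  split => //; rewrite inE => /orP[/eqP qp|/Hq//].
  by move: (H2 q q2); rewrite qp eqxx.
have [a [ba ax]] : exists a, ball x e' a /\ a != x.
  apply: contrapT => hn; apply: nis; split; first by rewrite inE.
  exists (ball x e'); first exact: nbhsx_ballx.
  rewrite setIT; apply/seteqP; split => q /=.
    by move=> bq; apply: contrapT => qx; apply: hn; exists q; split => //; apply/eqP.
  by move=> ->; exact: ballxx.
have [bea Fa] := He' a ba.
exists a; split => //; apply/negP => /Fa /eqP; exact/negP.
Qed.


Section P.
Context (X Y : metricType R) (t0 : (X * Y)%type).
Definition XYp : Type := (X * Y)%type.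
HB.instance Definition _ := PseudoMetric.copy XYp (X * Y)%type.
HB.instance Definition _ := isPointed.Build XYp t0.
Lemma cover_compact_of0 (A : set XYp) : compact A -> cover_compact A.
Proof. by rewrite compact_cover. Qed.
Lemma cover_compact_of (A : set (X*Y)%type) : compact A -> cover_compact A.
Proof. exact: (@cover_compact_of0 A). Qed.

Lemma dense_seq (T : set (X * Y)%type) :
  sigma_compact X -> sigma_compact Y -> closed T -> T t0 ->
  exists s : (nat * nat * nat * nat)%type -> (X * Y)%type, (forall i, T (s i)) /\
   forall t, T t -> forall e : R, 0 < e -> exists i, ball t e (s i).
Proof.
move=> [K [cK UK]] [L [cL UL]] clT Tt0.
have cov i j k : finite_subset_cover (K i `*` L j `&` T)
    (fun z => (ball z (k.+1%:R^-1))°) (K i `*` L j `&` T).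
  have := @cover_compact_of _ (compact_closedI (compact_setX (cK i) (cL j)) clT); apply.
  - move=> z _; exact: open_interior.
  - move=> z Cz; exists z => //; rewrite /interior; exact: nbhsx_ballx.
pose F i j k := s2val (cid2 (cov i j k)).
have FP i j k z : z \in F i j k -> (K i `*` L j `&` T) z.
  by move=> /(s2valP (cid2 (cov i j k))); rewrite inE.
have FP' i j k : K i `*` L j `&` T `<=` cover [set` F i j k] (fun z => (ball z (k.+1%:R^-1))°)
  := s2valP' (cid2 (cov i j k)).
exists (fun i => nth t0 (F i.1.1.1 i.1.1.2 i.1.2) i.2); split.
  move=> [[[i j] k] l] /=.
  have [lt|ge] := ltnP l (size (F i j k)).
    by have /FP [] := mem_nth t0 lt.
  by rewrite nth_default.
move=> t Tt e e0.
have : [set: X] t.1 by [].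
rewrite -UK => -[i _ Kit].
have : [set: Y] t.2 by [].
rewrite -UL => -[j _ Ljt].
have [k ke] := ltr_add_invr e0; rewrite add0r in ke.
have [z zF bz] := FP' i j k t (conj (conj Kit Ljt) Tt).
exists (i, j, k, index z (F i j k)) => /=.
rewrite nth_index //.
apply: ball_sym; apply: (le_ball (ltW ke)); exact: interior_subset.
Qed.
End P.

Lemma inv_le (M m : nat) : (M <= m)%N -> (m.+1%:R^-1 : R) <= M.+1%:R^-1.
Proof. by move=> h; rewrite lef_pV2 ?posrE ?ltr0Sn // ler_nat ltnS. Qed.

Definition idx {I : countType} (i0 : I) (m : nat) : I :=
  odflt i0 (choice.unpickle (logn 2 m.+1)).

Lemma idx_inf (I : countType) (i0 i : I) (M : nat) :
  exists m, (M <= m)%N /\ idx i0 m = i.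
Proof.
pose p := choice.pickle i.
have pos : (0 < 2 ^ p * M.*2.+1)%N by rewrite muln_gt0 expn_gt0.
exists (2 ^ p * M.*2.+1).-1; split.
  have : (1 <= 2 ^ p)%N by rewrite expn_gt0.
  move: pos; set q := (2 ^ p)%N => pos q1.
  rewrite -ltnS prednK //. 
  apply: (@leq_trans (M.*2.+1)); first by rewrite ltnS -addnn leq_addr.
  by rewrite leq_pmull.
rewrite /idx prednK // lognM ?expn_gt0 // pfactorK // logn_coprime ?addn0.
  by rewrite choice.pickleK.
by rewrite coprime2n /= odd_double.
Qed.

End S.

Theorem lemma2p5 (R : realType) (X Y : metricType R) :
  sigma_compact X -> sigma_compact Y ->
  (forall x : X, ~ isolated [set: X] x) ->
  forall T : set (X * Y), closed T ->
  exists (A : set X) (f : {x : X | A x} -> Y), countable A /\ L_f f = T.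
Proof.
move=> hX hY nis T clT.
case: (pselect (exists t, T t)) => [[t0 Tt0]|nT]; last first.
  exists set0, (fun p => False_rect _ (proj2_sig p)); split; first exact: countable0.
  apply/seteqP; split => t /=; last by move=> Tt; exfalso; apply: nT; exists t.
  by move=> /(_ setT filterT) [y [_ [[x []]]]].
have [s [sT sD]] := @dense_seq R X Y t0 T hX hY clT Tt0.
pose n m := idx (0, 0, 0, 0)%N m.
pose xm m := (s (n m)).1.
pose ym m := (s (n m)).2.
have pk m (F : seq X) : exists a, [/\ ball (xm m) (m.+1%:R^-1) a, a != xm m & a \notin F].
  by apply: avoid_fin => //; rewrite invr_gt0 ltr0Sn.
pose pick m F := projT1 (cid (pk m F)).
have pickP m F : [/\ ball (xm m) (m.+1%:R^-1) (pick m F), pick m F != xm m & pick m F \notin F].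
  exact: projT2 (cid (pk m F)).
pose pts := fix pts (m : nat) : seq X := if m is m'.+1 then pick m' (pts m') :: pts m' else [::].
pose a m := pick m (pts m).
have a_in j m : (j < m)%N -> a j \in pts m.
  elim: m => // m IH; rewrite ltnS leq_eqVlt => /orP[/eqP->|/IH h] /=.
    by rewrite inE eqxx.
  by rewrite inE h orbT.
have a_inj : injective a.
  have aux j m : (j < m)%N -> a j != a m.
    move=> /a_in h; have [_ _ /negP nm] := pickP m (pts m).
    by apply/eqP => e; apply: nm; rewrite -/(a m) -e.
  move=> j m e; case: (ltngtP j m) => // h.
    by move: (aux _ _ h); rewrite e eqxx.
  by move: (aux _ _ h); rewrite e eqxx.
pose A := range a.
pose mof (x : {x : X | A x}) : nat := s2val (cid2 (proj2_sig x)).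
have mofP x : a (mof x) = proj1_sig x := s2valP' (cid2 (proj2_sig x)).
pose f (x : {x : X | A x}) := ym (mof x).
exists A, f; split.
  exact: card_le_trans (card_image_le a setT) (countableP _).
have graphE : graph_on f = [set p | exists m, p = (a m, ym m)].
  apply/seteqP; split => p /=.
    by move=> [x ->]; exists (mof x); rewrite mofP.
  move=> [m ->].
  have Am : A (a m) by exists m.
  exists (exist _ (a m) Am) => /=.
  have e := mofP (exist _ (a m) Am); rewrite /= in e.
  by rewrite /f (a_inj _ _ e).
rewrite /L_f graphE; apply/seteqP; have bm m : ball (s (n m)) (m.+1%:R^-1) (a m, ym m).
  have [b _ _] := pickP m (pts m); split => //=.
  by apply: ballxx; rewrite invr_gt0 ltr0Sn.
have e2 (e : R) : 0 < e -> 0 < e / 2 by move=> e0; rewrite divr_gt0.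
have bmle m (M : nat) (e : R) : (M <= m)%N -> M.+1%:R^-1 < e ->
    ball (s (n m)) e (a m, ym m).
  move=> Mm Me; apply: (le_ball _ (bm m)); apply: ltW; exact: le_lt_trans (@inv_le R _ _ Mm) Me.
split.
  move=> t Lt; apply: contrapT => nTt.
  have : nbhs t (~` T) by apply: open_nbhs_nbhs; split => //; exact: closed_openC.
  move=> /nbhs_ballP [e e0 He].
  have [M HM] := ltr_add_invr (e2 _ e0); rewrite add0r in HM.
  have nW M' : nbhs t (fun q => forall j, (j < M')%N -> q = (a j, ym j) -> q = t).
    elim: M' => [|M' IH]; first by apply: filterE.
    have [pt|pt] := eqVneq (a M', ym M') t.
      apply: filterS IH => q Hq j; rewrite ltnS leq_eqVlt => /orP[/eqP->|/Hq//].
      by move=> ->.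
    have : nbhs t (fun q => q != (a M', ym M')).
      have [h1|h1] := eqVneq t.1 (a M').
        have h2 : t.2 != ym M'.
          apply/eqP => e'; move/eqP: pt; apply.
          by rewrite [in RHS](surjective_pairing t) h1 e'.
        have [d d0 Hd] := @sep_pt R _ _ _ h2.
        apply/nbhs_ballP; exists d => // q [_ bq]; apply: contraNneq (Hd _ bq) => ->.
        done.
      have [d d0 Hd] := @sep_pt R _ _ _ h1.
      apply/nbhs_ballP; exists d => // q [bq _]; apply: contraNneq (Hd _ bq) => ->.
      done.
    move=> nq; apply: filterS (filterI IH nq) => q [Hq qn] j.
    rewrite ltnS leq_eqVlt => /orP[/eqP->|/Hq//].
    by move=> e'; move: qn; rewrite e' eqxx.
  have nV : nbhs t (ball t (e / 2) `&` (fun q => forall j, (j < M)%N -> q = (a j, ym j) -> q = t)).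
    by apply: filterI => //; exact: nbhsx_ballx (e2 _ e0).
  have [q [qt [m qe] [bq Wq]]] := Lt _ nV.
  case: (ltnP m M) => [lt|ge].
    by move: qt; rewrite (Wq m lt qe) eqxx.
  apply: (He (s (n m))); last exact: sT.
  rewrite [e]splitr; apply: (ball_triangle bq); rewrite qe; apply: ball_sym.
  exact: bmle ge HM.
move=> t Tt U /nbhs_ballP [e e0 He].
have [i bi] := sD t Tt (e / 2) (e2 _ e0).
have [M HM] := ltr_add_invr (e2 _ e0); rewrite add0r in HM.
have key m : n m = i -> (M <= m)%N -> U (a m, ym m).
  move=> nmi Mm; apply: He; rewrite [e]splitr; apply: (ball_triangle bi).
  by rewrite -nmi; exact: bmle Mm HM.
have [m1 [m1M nm1]] := @idx_inf _ (0, 0, 0, 0)%N i M.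
have [m2 [m2M nm2]] := @idx_inf _ (0, 0, 0, 0)%N i m1.+1.
have [h1|h1] := eqVneq (a m1) t.1.
  exists (a m2, ym m2); split.
  - apply/eqP => /(congr1 fst) /= e'.
    by have := a_inj _ _ (etrans e' (esym h1)) => e''; move: m2M; rewrite e'' ltnn.
  - by exists m2.
  - by apply: key => //; apply: leq_trans m1M (ltnW m2M).
exists (a m1, ym m1); split.
- by apply/eqP => /(congr1 fst) /= e'; move: h1; rewrite e' eqxx.
- by exists m1.
- exact: key.
Qed.
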